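(* Let $(\mathcal E,B,\mathcal L_{\mathcal P})$ be an epistemic space with $|\mathcal P|\ge 2$, let $\mathcal S$ be a set of agents, and let $\nabla$ be an ES basic fusion operator. If $\nabla$ satisfies (ESF-SD), (ESF-P) and (ESF-I), then $\nabla$ satisfies (ESF-D).
   Context: $\mathcal L_{\mathcal P}$ is the set of propositional formulas over a finite set $\mathcal P$ of variables, $\mathcal W_{\mathcal P}$ its set of valuations (interpretations), and $[\![\phi]\!]$ the set of models of $\phi$. For a nonempty set $M$ of valuations, $\varphi_M$ denotes a formula with $[\![\varphi_M]\!]=M$ (written $\varphi_w$, $\varphi_{w,w'}$, etc.). An epistemic space is a triple $(\mathcal E,B,\mathcal L_{\mathcal P})$ with $\mathcal E$ a nonempty set (of epistemic states) and $B:\mathcal E\to\mathcal L_{\mathcal P}$ a function whose image modulo logical equivalence is exactly the set of consistent formulas modulo equivalence. Agents form a well-ordered set $(\mathcal S,<)$; a society is a nonempty finite $N\subseteq\mathcal S$; an $N$-profile is a function $\Phi:N\to\mathcal E$, with $E_i:=\Phi(i)$; for $N=\{i\}$ the profile is identified with $E_i$ (an $i$-profile). Profiles $\Phi$ on $N=\{i_1<\dots<i_n\}$ and $\Psi$ on $M=\{j_1<\dots<j_m\}$ are equivalent, $\Phi\equiv\Psi$, if $n=m$ and $\Phi(i_k)=\Psi(j_k)$ for all $k$. An ES combination operator $\nabla$ assigns to every profile $\Phi$ (of any society) and every $E\in\mathcal E$ an epistemic state $\nabla(\Phi,E)\in\mathcal E$. It is an ES basic fusion operator if for all profiles $\Phi,\Phi'$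 and $E,E',E''\in\mathcal E$: (ESF1) $B(\nabla(\Phi,E))\vdash B(E)$; (ESF2) if $\Phi\equiv\Phi'$ and $B(E)\equiv B(E')$ then $B(\nabla(\Phi,E))\equiv B(\nabla(\Phi',E'))$; (ESF3) if $B(E)\equiv B(E')\wedge B(E'')$ then $B(\nabla(\Phi,E'))\wedge B(E'')\vdash B(\nabla(\Phi,E))$; (ESF4) if $B(E)\equiv B(E')\wedge B(E'')$ and $B(\nabla(\Phi,E'))\wedge B(E'')\nvdash\bot$ then $B(\nabla(\Phi,E))\vdash B(\nabla(\Phi,E'))\wedge B(E'')$. Social postulates: (ESF-SD) for every agent $i$, every three interpretations $w,w',w''$ and every $E_{w,w'},E_{w',w''}\in\mathcal E$ with $[\![B(E_{w,w'})]\!]=\{w,w'\}$, $[\![B(E_{w',w''})]\!]=\{w',w''\}$, each of the following four pairs of conditions is realised by some $i$-profile $E_i$: (i) $B(\nabla(E_i,E_{w,w'}))\equiv\varphi_{w,w'}$ and $B(\nabla(E_i,E_{w',w''}))\equiv\varphi_{w',w''}$; (ii) $\equiv\varphi_{w,w'}$ and $\equiv\varphi_{w'}$; (iii) $\equiv\varphi_w$ and $\equiv\varphi_{w',w''}$; (iv) $\equiv\varphi_w$ and $\equiv\varphi_{w'}$. (ESF-P) for every society $N$, every $N$-profile $\Phi$ and all $E,E'$: if $\bigwedge_{i\in N}B(\nabla(E_i,E))\nvdash\bot$ and $B(\nabla(E_i,E))\wedge B(E')\vdash\bot$ for all $i\in N$, then $B(\nabla(\Phi,E))\wedge B(E')\vdash\bot$.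 (ESF-I) for every society $N$, all $N$-profiles $\Phi,\Phi'$ and every $E$: if for every $E'$ with $B(E')\vdash B(E)$ one has $B(\nabla(E_j,E'))\equiv B(\nabla(E'_j,E'))$ for all $j\in N$, then $B(\nabla(\Phi,E))\equiv B(\nabla(\Phi',E))$. (ESF-D) for every society $N$ there exists $d_N\in N$ such that for every $N$-profile $\Phi$ and every $E$, $B(\nabla(\Phi,E))\vdash B(\nabla(E_{d_N},E))$. *)

(* Defs.v *)
From mathcomp Require Import all_boot.
From Stdlib Require Import List Sorted.

Set Implicit Arguments.
Unset Strict Implicit.
Unset Printing Implicit Defensive.

Inductive form (P : Type) : Type :=
  | FVar of P
  | FTop
  | FBot
  | FNot of form P
  | FAnd of form P & form P
  | FOr of form P & form P
  | FImp of form P & form P.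

Definition valuation (P : finType) := {ffun P -> bool}.

Fixpoint sat (P : finType) (w : valuation P) (f : form P) : bool :=
  match f with
  | FVar p => w p
  | FTop => true
  | FBot => false
  | FNot g => ~~ sat w g
  | FAnd g h => sat w g && sat w h
  | FOr g h => sat w g || sat w h
  | FImp g h => sat w g ==> sat w h
  end.

Definition entails (P : finType) (f g : form P) : Prop :=
  forall w : valuation P, sat w f -> sat w g.
Definition fequiv (P : finType) (f g : form P) : Prop :=
  entails f g /\ entails g f.
Definition consistent (P : finType) (f : form P) : Prop :=
  exists w : valuation P, sat w f.
Definition models_are (P : finType) (f : form P) (M : valuation P -> Prop) : Prop :=
  forall w, sat w f <-> M w.

Definition epistemic_space (P : finType) (E : Type) (B : E -> form P) : Prop :=
  inhabited E /\
  (forall e, consistent (B e)) /\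
  (forall f : form P, consistent f -> exists e, fequiv (B e) f).

Definition strict_well_order (S : Type) (lt : S -> S -> Prop) : Prop :=
  well_founded lt /\
  (forall x y z, lt x y -> lt y z -> lt x z) /\
  (forall x, ~ lt x x) /\
  (forall x y, lt x y \/ x = y \/ lt y x).

(* A society N = {i_1 < ... < i_n} is represented by the strictly increasing
   nonempty list of its members. *)
Definition is_society (S : Type) (lt : S -> S -> Prop) (N : list S) : Prop :=
  N <> nil /\ Sorted lt N.

(* A profile Phi : N -> E is represented by the list [(i_1,E_{i_1}); ...;
   (i_n,E_{i_n})], strictly increasing in the agents; its society is map fst. *)
Definition is_profile (S E : Type) (lt : S -> S -> Prop) (l : list (S * E)) : Prop :=
  l <> nil /\ Sorted (fun a b => lt (fst a) (fst b)) l.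

Definition is_N_profile (S E : Type) (lt : S -> S -> Prop) (N : list S)
  (l : list (S * E)) : Prop :=
  is_profile lt l /\ map fst l = N.

(* Phi == Psi : same size and Phi(i_k) = Psi(j_k) for all k *)
Definition prof_equiv (S E : Type) (l1 l2 : list (S * E)) : Prop :=
  map snd l1 = map snd l2.

Definition single (S E : Type) (i : S) (e : E) : list (S * E) := (i, e) :: nil.

(* An ES combination operator: nabla : profiles -> E -> E
   (values on lists that are not profiles are irrelevant). *)
Definition combination (S E : Type) := list (S * E) -> E -> E.

Definition ES_basic_fusion (P : finType) (S E : Type) (lt : S -> S -> Prop)
  (B : E -> form P) (nabla : combination S E) : Prop :=
  (forall Phi e, is_profile lt Phi -> entails (B (nabla Phi e)) (B e)) /\
  (forall Phi Phi' e e', is_profile lt Phi -> is_profile lt Phi' ->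
     prof_equiv Phi Phi' -> fequiv (B e) (B e') ->
     fequiv (B (nabla Phi e)) (B (nabla Phi' e'))) /\
  (forall Phi e e' e'', is_profile lt Phi ->
     fequiv (B e) (FAnd (B e') (B e'')) ->
     entails (FAnd (B (nabla Phi e')) (B e'')) (B (nabla Phi e))) /\
  (forall Phi e e' e'', is_profile lt Phi ->
     fequiv (B e) (FAnd (B e') (B e'')) ->
     consistent (FAnd (B (nabla Phi e')) (B e'')) ->
     entails (B (nabla Phi e)) (FAnd (B (nabla Phi e')) (B e''))).

Definition ESF_SD (P : finType) (S E : Type)
  (B : E -> form P) (nabla : combination S E) : Prop :=
  forall (i : S) (w w' w'' : valuation P),
    w <> w' -> w' <> w'' -> w <> w'' ->
    forall Eww' Ew'w'' : E,
      models_are (B Eww') (fun v => v = w \/ v = w') ->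
      models_are (B Ew'w'') (fun v => v = w' \/ v = w'') ->
      (exists Ei, models_are (B (nabla (single i Ei) Eww')) (fun v => v = w \/ v = w') /\
                  models_are (B (nabla (single i Ei) Ew'w'')) (fun v => v = w' \/ v = w'')) /\
      (exists Ei, models_are (B (nabla (single i Ei) Eww')) (fun v => v = w \/ v = w') /\
                  models_are (B (nabla (single i Ei) Ew'w'')) (fun v => v = w')) /\
      (exists Ei, models_are (B (nabla (single i Ei) Eww')) (fun v => v = w) /\
                  models_are (B (nabla (single i Ei) Ew'w'')) (fun v => v = w' \/ v = w'')) /\
      (exists Ei, models_are (B (nabla (single i Ei) Eww')) (fun v => v = w) /\
                  models_are (B (nabla (single i Ei) Ew'w'')) (fun v => v = w')).

Definition ESF_P (P : finType) (S E : Type) (lt : S -> S -> Prop)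
  (B : E -> form P) (nabla : combination S E) : Prop :=
  forall (N : list S) (Phi : list (S * E)) (e e' : E),
    is_society lt N -> is_N_profile lt N Phi ->
    (exists w : valuation P, forall i ei, In (i, ei) Phi -> sat w (B (nabla (single i ei) e))) ->
    (forall i ei, In (i, ei) Phi ->
       ~ consistent (FAnd (B (nabla (single i ei) e)) (B e'))) ->
    ~ consistent (FAnd (B (nabla Phi e)) (B e')).

Definition ESF_I (P : finType) (S E : Type) (lt : S -> S -> Prop)
  (B : E -> form P) (nabla : combination S E) : Prop :=
  forall (N : list S) (Phi Phi' : list (S * E)) (e : E),
    is_society lt N -> is_N_profile lt N Phi -> is_N_profile lt N Phi' ->
    (forall e' : E, entails (B e') (B e) ->
       forall j ej ej', In (j, ej) Phi -> In (j, ej') Phi' ->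
         fequiv (B (nabla (single j ej) e')) (B (nabla (single j ej') e'))) ->
    fequiv (B (nabla Phi e)) (B (nabla Phi' e)).

Definition ESF_D (P : finType) (S E : Type) (lt : S -> S -> Prop)
  (B : E -> form P) (nabla : combination S E) : Prop :=
  forall N : list S, is_society lt N ->
    exists d : S, In d N /\
      forall (Phi : list (S * E)) (e : E), is_N_profile lt N Phi ->
        forall ed : E, In (d, ed) Phi ->
          entails (B (nabla Phi e)) (B (nabla (single d ed) e)).

(* Main.v *)
Require Import Defs.
From mathcomp Require Import all_boot.
From Stdlib Require Import List Sorted Classical ClassicalEpsilon.

Set Implicit Arguments.
Unset Strict Implicit.

Section Basics.
Variable P : finType.

Definition charf (w : valuation P) : form P :=
  foldr (fun p f => FAnd (if w p then FVar p else FNot (FVar p)) f) (@FTop P) (enum P).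

Lemma sat_charf v w : sat v (charf w) = (v == w).
Proof.
rewrite /charf.
have H : forall s, sat v (foldr (fun p f => FAnd (if w p then FVar p else FNot (FVar p)) f) (@FTop P) s) = all (fun p => v p == w p) s.
  elim=> [|p s IH] //=. rewrite IH. case Hw: (w p); case Hv: (v p) => /=; by rewrite ?Hv.
rewrite H. apply/idP/idP.
- move/allP=> Ha. apply/eqP/ffunP=> p. apply/eqP. apply: Ha. by rewrite mem_enum.
- move/eqP=> ->. by apply/allP=> p _.
Qed.

Lemma third (HP : (1 < #|P|)%N) (a b : valuation P) : exists c : valuation P, c != a /\ c != b.
Proof.
case: (pickP (fun c : valuation P => (c != a) && (c != b))) => [c /andP [] | H].
  by exists c.
exfalso.
have Hs : (predT : {pred valuation P}) \subset [set a; b].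
  apply/subsetP=> c _. move: (H c). rewrite !inE. by case: (c == a); case: (c == b).
have h1 := subset_leq_card Hs.
rewrite cards2 in h1.
have h2 : #|(predT : {pred valuation P})| = (2 ^ #|P|)%N.
  by rewrite -(card_bool) -card_ffun.
have h3 : (2 ^ 2 <= 2 ^ #|P|)%N by rewrite leq_exp2l.
rewrite h2 in h1. have := leq_trans h3 h1. by case: (a != b).
Qed.
End Basics.

Section Main.
Variables (P : finType) (E : Type) (B : E -> form P) (S : Type)
  (lt : S -> S -> Prop) (nabla : combination S E).
Hypothesis HES : epistemic_space B.
Hypothesis HP : (1 < #|P|)%N.
Hypothesis Hwo : strict_well_order lt.
Hypothesis HF : ES_basic_fusion lt B nabla.
Hypothesis HSD : ESF_SD B nabla.
Hypothesis HPa : ESF_P lt B nabla.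
Hypothesis HI : ESF_I lt B nabla.

Local Notation W := (valuation P).

Definition inhE : inhabited E := proj1 HES.

Definition stt (f : form P) : E := epsilon inhE (fun e => fequiv (B e) f).

Lemma stt_spec f : consistent f -> forall v, sat v (B (stt f)) = sat v f.
Proof.
move=> Hc.
have [h1 h2] := epsilon_spec inhE (fun e => fequiv (B e) f) (proj2 (proj2 HES) f Hc).
move=> v; apply/idP/idP; [apply: h1 | apply: h2].
Qed.

Definition pst (x y : W) := stt (FOr (charf x) (charf y)).
Definition sst (x : W) := stt (charf x).
Definition tst (x y z : W) := stt (FOr (FOr (charf x) (charf y)) (charf z)).

Lemma sat_pst x y v : sat v (B (pst x y)) = (v == x) || (v == y).
Proof.
rewrite /pst stt_spec /= ?sat_charf //. exists x. by rewrite /= !sat_charf eqxx.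
Qed.

Lemma sat_sst x v : sat v (B (sst x)) = (v == x).
Proof.
rewrite /sst stt_spec /= ?sat_charf //. exists x. by rewrite /= !sat_charf eqxx.
Qed.

Lemma sat_tst x y z v : sat v (B (tst x y z)) = [|| v == x, v == y | v == z].
Proof.
rewrite /tst stt_spec /= ?sat_charf ?orbA //. exists x. by rewrite /= !sat_charf eqxx.
Qed.

Lemma cons_B e : exists v, sat v (B e).
Proof. exact: (proj1 (proj2 HES) e). Qed.

Lemma fus1 Phi e v : is_profile lt Phi -> sat v (B (nabla Phi e)) -> sat v (B e).
Proof. move=> Hp. exact: (proj1 HF Phi e Hp v). Qed.

Lemma fus2 Phi Phi' e e' : is_profile lt Phi -> is_profile lt Phi' -> prof_equiv Phi Phi' ->
  (forall v, sat v (B e) = sat v (B e')) ->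
  forall v, sat v (B (nabla Phi e)) = sat v (B (nabla Phi' e')).
Proof.
move=> H1 H2 H3 H4.
have [h1 h2] := proj1 (proj2 HF) Phi Phi' e e' H1 H2 H3 (conj (fun v h => (eq_ind _ _ h _ (H4 v))) (fun v h => (eq_ind _ _ h _ (esym (H4 v))))).
move=> v; apply/idP/idP; [apply: h1 | apply: h2].
Qed.

Lemma arrowax Phi eX eY w : is_profile lt Phi ->
  (forall v, sat v (B eX) -> sat v (B eY)) ->
  sat w (B (nabla Phi eY)) -> sat w (B eX) ->
  forall v, sat v (B (nabla Phi eX)) = sat v (B (nabla Phi eY)) && sat v (B eX).
Proof.
move=> Hp Hsub Hw Hw'.
have [_ [_ [H3 H4]]] := HF.
have Heq : fequiv (B eX) (FAnd (B eY) (B eX)).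
  split=> v /=; [move=> h; by rewrite h (Hsub v h) | by case/andP].
move=> v; apply/idP/idP.
- move=> h. have := H4 Phi eX eY eX Hp Heq (ex_intro _ w _) v h. apply. by rewrite /= Hw Hw'.
- move=> h. exact: (H3 Phi eX eY eX Hp Heq v).
Qed.

Definition le Phi x y := sat x (B (nabla Phi (pst x y))).

Lemma le_swap Phi x y : is_profile lt Phi -> sat y (B (nabla Phi (pst x y))) = le Phi y x.
Proof.
move=> Hp. rewrite /le. apply: fus2 => //. move=> v; by rewrite !sat_pst orbC.
Qed.

Lemma nab_pst Phi x y v : is_profile lt Phi ->
  sat v (B (nabla Phi (pst x y))) = ((v == x) && le Phi x y) || ((v == y) && le Phi y x).
Proof.
move=> Hp.
case vx: (v == x).
  move/eqP: vx => ->. rewrite /=. case: (x =P y) => [<-|_]; by rewrite /le ?orbb ?orbF.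
case vy: (v == y).
  move/eqP: vy => ->. by rewrite le_swap.
rewrite /=. apply/negbTE/negP => h. have := fus1 Hp h. by rewrite sat_pst vx vy.
Qed.

Lemma le_tot Phi x y : is_profile lt Phi -> le Phi x y || le Phi y x.
Proof.
move=> Hp. have [v Hv] := cons_B (nabla Phi (pst x y)).
rewrite nab_pst // in Hv. case/orP: Hv => /andP [_ ->]; by rewrite ?orbT.
Qed.

Lemma le_trans Phi x y z : is_profile lt Phi -> le Phi x y -> le Phi y z -> le Phi x z.
Proof.
move=> Hp Hxy Hyz.
set T := tst x y z.
have key : forall a b, [|| a == x, a == y | a == z] -> [|| b == x, b == y | b == z] ->
   sat a (B (nabla Phi T)) || sat b (B (nabla Phi T)) ->
   forall v, sat v (B (nabla Phi (pst a b))) = sat v (B (nabla Phi T)) && ((v == a) || (v == b)).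
  move=> a b ha hb hc v. rewrite -sat_pst.
  have Hsub : forall v, sat v (B (pst a b)) -> sat v (B T).
    move=> u. rewrite sat_pst sat_tst. by case/orP=> /eqP ->.
  case/orP: hc => hc.
  - apply: (arrowax (w:=a)) => //. by rewrite sat_pst eqxx.
  - apply: (arrowax (w:=b)) => //. by rewrite sat_pst eqxx orbT.
have [c Hc] := cons_B (nabla Phi T).
have HcT := fus1 Hp Hc. rewrite sat_tst in HcT.
have cx : sat x (B (nabla Phi T)) -> le Phi x z.
  move=> h.
  have e := key x z ltac:(by rewrite eqxx) ltac:(by rewrite eqxx !orbT) ltac:(by rewrite h).
  by rewrite /le e h eqxx.
have cy : sat y (B (nabla Phi T)) -> sat x (B (nabla Phi T)).
  move=> h. move: Hxy.
  have e := key x y ltac:(by rewrite eqxx) ltac:(by rewrite eqxx !orbT) ltac:(by rewrite h orbT).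
  rewrite /le e. by case/andP.
have cz : sat z (B (nabla Phi T)) -> sat y (B (nabla Phi T)).
  move=> h. move: Hyz.
  have e := key y z ltac:(by rewrite eqxx orbT) ltac:(by rewrite eqxx !orbT) ltac:(by rewrite h orbT).
  rewrite /le e. by case/andP.
case/or3P: HcT => /eqP Hc'; subst c; auto.
Qed.

Lemma le_refl Phi x : is_profile lt Phi -> le Phi x x.
Proof. move=> Hp. have := le_tot x x Hp. by rewrite orbb. Qed.

Definition ltp Phi x y := ~~ le Phi y x.

Lemma lt_le Phi x y : is_profile lt Phi -> ltp Phi x y -> le Phi x y.
Proof. move=> Hp. rewrite /ltp. have := le_tot x y Hp. by case: (le Phi x y); case: (le Phi y x). Qed.

Lemma le_lt_trans Phi x y z : is_profile lt Phi -> le Phi x y -> ltp Phi y z -> ltp Phi x z.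
Proof.
move=> Hp h1 h2. apply/negP => h. move/negP: h2; apply. exact: le_trans h h1.
Qed.

Lemma lt_le_trans Phi x y z : is_profile lt Phi -> ltp Phi x y -> le Phi y z -> ltp Phi x z.
Proof.
move=> Hp h1 h2. apply/negP => h. move/negP: h1; apply. exact: le_trans h2 h.
Qed.

Lemma lt_trans Phi x y z : is_profile lt Phi -> ltp Phi x y -> ltp Phi y z -> ltp Phi x z.
Proof. move=> Hp h1 h2. apply: lt_le_trans h1 (lt_le Hp h2) => //. Qed.

Lemma single_prof (i : S) (e : E) : is_profile lt (single i e).
Proof. split; [by [] | repeat constructor]. Qed.

Lemma le_single_indep i j e x y : le (single i e) x y = le (single j e) x y.
Proof. rewrite /le. apply: fus2 => //; exact: single_prof. Qed.

Lemma models1 (f : form P) a : models_are f (fun v => v = a) -> forall v, sat v f = (v == a).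
Proof. move=> H v. apply/idP/eqP => [/H // | ->]. by apply/H. Qed.

Lemma models2 (f : form P) a b : models_are f (fun v => v = a \/ v = b) ->
  forall v, sat v f = (v == a) || (v == b).
Proof.
move=> H v. apply/idP/idP => [/H [->|->] | /orP [/eqP ->|/eqP ->]]; rewrite ?eqxx ?orbT //; apply/H; auto.
Qed.

Lemma models_pst a b : models_are (B (pst a b)) (fun v => v = a \/ v = b).
Proof.
move=> v. rewrite sat_pst. split => [/orP [/eqP->|/eqP->] | [->|->]]; rewrite ?eqxx ?orbT; auto.
Qed.

Lemma realize (i0 : S) w w' w'' (b1 b2 : bool) : w != w' -> w' != w'' -> w != w'' ->
  exists Ei, forall i, [/\ le (single i Ei) w w', le (single i Ei) w' w = b1,
     le (single i Ei) w' w'' & le (single i Ei) w'' w' = b2].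
Proof.
move=> n1 n2 n3.
have [[E1 [h1 h2]] [[E2 [h3 h4]] [[E3 [h5 h6]] [E4 [h7 h8]]]]] :=
  HSD i0 (elimN eqP n1) (elimN eqP n2) (elimN eqP n3) (models_pst w w') (models_pst w' w'').
have F : forall Ei i x y, le (single i Ei) y x = sat y (B (nabla (single i0 Ei) (pst x y))).
  move=> Ei i x y. rewrite (le_single_indep i i0) le_swap //; exact: single_prof.
have G : forall Ei i x y, le (single i Ei) x y = sat x (B (nabla (single i0 Ei) (pst x y))).
  move=> Ei i x y. by rewrite (le_single_indep i i0).
have n1' := negbTE n1. have n2' := negbTE n2. rewrite eq_sym in n1. rewrite eq_sym in n2.
have n1'' := negbTE n1. have n2'' := negbTE n2.
case: b1; case: b2.
- exists E1 => i. rewrite (G _ _ w w') (F _ _ w w') (G _ _ w' w'') (F _ _ w' w'') !(models2 h1) !(models2 h2).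
  by rewrite !eqxx ?orbT.
- exists E2 => i. rewrite (G _ _ w w') (F _ _ w w') (G _ _ w' w'') (F _ _ w' w'') !(models2 h3) !(models1 h4).
  by rewrite !eqxx ?orbT n2''.
- exists E3 => i. rewrite (G _ _ w w') (F _ _ w w') (G _ _ w' w'') (F _ _ w' w'') !(models1 h5) !(models2 h6).
  by rewrite !eqxx ?orbT n1''.
- exists E4 => i. rewrite (G _ _ w w') (F _ _ w w') (G _ _ w' w'') (F _ _ w' w'') !(models1 h7) !(models1 h8).
  by rewrite !eqxx n1'' n2''.
Qed.


Lemma chain (i0 : S) u v w : u != v -> v != w -> u != w ->
  exists Ei, forall i, [/\ ltp (single i Ei) u v, ltp (single i Ei) v w & ltp (single i Ei) u w].
Proof.
move=> n1 n2 n3. have [Ei H] := realize i0 false false n1 n2 n3.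
exists Ei => i. have [h1 h2 h3 h4] := H i.
have l1 : ltp (single i Ei) u v by rewrite /ltp h2.
have l2 : ltp (single i Ei) v w by rewrite /ltp h4.
split => //. apply: lt_trans l1 l2. exact: single_prof.
Qed.

Lemma bot (i0 : S) v u w (l1 l2 : bool) : v != u -> u != w -> v != w -> l1 || l2 ->
  exists Ei, forall i, [/\ ltp (single i Ei) v u, ltp (single i Ei) v w,
     le (single i Ei) u w = l1 & le (single i Ei) w u = l2].
Proof.
move=> n1 n2 n3. case: l1; case: l2 => // _.
- have [Ei H] := realize i0 false true n1 n2 n3.
  exists Ei => i. have [h1 h2 h3 h4] := H i.
  have k1 : ltp (single i Ei) v u by rewrite /ltp h2.
  split => //. apply: lt_le_trans k1 h3. exact: single_prof.
- have [Ei H] := chain i0 n1 n2 n3. exists Ei => i. have [h1 h2 h3] := H i.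
  split => //. apply: lt_le => //; exact: single_prof. by apply/negbTE.
- rewrite eq_sym in n2. have [Ei H] := chain i0 n3 n2 n1. exists Ei => i. have [h1 h2 h3] := H i.
  split => //. by apply/negbTE. apply: lt_le => //; exact: single_prof.
Qed.

Lemma top (i0 : S) v u w (l1 l2 : bool) : v != u -> u != w -> v != w -> l1 || l2 ->
  exists Ei, forall i, [/\ ltp (single i Ei) u v, ltp (single i Ei) w v,
     le (single i Ei) u w = l1 & le (single i Ei) w u = l2].
Proof.
move=> n1 n2 n3. case: l1; case: l2 => // _.
- rewrite eq_sym in n3. rewrite eq_sym in n1. have [Ei H] := realize i0 true false n2 n3 n1.
  exists Ei => i. have [h1 h2 h3 h4] := H i.
  have k1 : ltp (single i Ei) w v by rewrite /ltp h4.
  split => //. apply: le_lt_trans h1 k1. exact: single_prof.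
- rewrite eq_sym in n1. rewrite eq_sym in n3. have [Ei H] := chain i0 n2 n3 n1.
  exists Ei => i. have [h1 h2 h3] := H i.
  split => //. apply: lt_le => //; exact: single_prof. by apply/negbTE.
- rewrite eq_sym in n1. rewrite eq_sym in n2. rewrite eq_sym in n3.
  have [Ei H] := chain i0 n2 n1 n3. exists Ei => i. have [h1 h2 h3] := H i.
  split => //. by apply/negbTE. apply: lt_le => //; exact: single_prof.
Qed.

Lemma Sorted_map_rel (A C : Type) (R : A -> A -> Prop) (R' : C -> C -> Prop) (f : A -> C) l :
  (forall a b, R a b -> R' (f a) (f b)) -> Sorted R l -> Sorted R' (map f l).
Proof.
move=> Hf Hs. induction Hs as [|a l Hs IH Hd]; simpl; constructor; auto.
destruct Hd; simpl; constructor; auto.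
Qed.

Lemma nprof_map N (h : S -> E) : is_society lt N -> is_N_profile lt N (map (fun i => (i, h i)) N).
Proof.
move=> [Hn Hs]. split; [split|].
- by case: N Hn {Hs}.
- apply: (Sorted_map_rel (R := lt)) => //.
- elim: N {Hn Hs} => //= a l ->. by [].
Qed.

Lemma nprof_mod N Phi (g : S -> E -> E) : is_N_profile lt N Phi ->
  is_N_profile lt N (map (fun pr => (pr.1, g pr.1 pr.2)) Phi).
Proof.
move=> [[Hn Hs] Hm]. split; [split|].
- by case: Phi Hn {Hs Hm}.
- apply: (Sorted_map_rel (R := fun a b => lt a.1 b.1)) => //.
- rewrite -Hm. elim: Phi {Hn Hs Hm} => //= a l ->. by [].
Qed.

Lemma in_mod Phi (g : S -> E -> E) j e' : In (j, e') (map (fun pr => (pr.1, g pr.1 pr.2)) Phi) ->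
  exists ej, In (j, ej) Phi /\ e' = g j ej.
Proof.
case/in_map_iff => [[a b] [[<- <-] H]]. by exists b.
Qed.

Lemma in_map_prof N (h : S -> E) j e' : In (j, e') (map (fun i => (i, h i)) N) -> e' = h j.
Proof. case/in_map_iff => [a [[<- <-] _]]. by []. Qed.

Lemma in_nprof N (Phi : list (S * E)) i e : is_N_profile lt N Phi -> In (i, e) Phi -> In i N.
Proof. move=> [_ <-] H. exact: (List.in_map fst Phi (i, e) H). Qed.

Lemma prof_uniq (Phi : list (S * E)) j (e1 e2 : E) : is_profile lt Phi -> In (j, e1) Phi -> In (j, e2) Phi -> e1 = e2.
Proof.
move=> [_ Hs].
have [_ [Htr [Hirr _]]] := Hwo.
have Hss : StronglySorted (fun a b : S * E => lt a.1 b.1) Phi.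
  apply: Sorted_StronglySorted => // a b c. exact: Htr.
elim: Hss => {Hs} // a l _ IH Hf /= H1 H2.
rewrite Forall_forall in Hf.
case: H1 => [E1|H1]; case: H2 => [E2|H2].
- by rewrite E1 in E2; case: E2.
- subst a. have := Hf _ H2. by move/Hirr.
- subst a. have := Hf _ H1. by move/Hirr.
- exact: IH.
Qed.

Lemma agent_of N : is_society lt N -> exists i, In i N.
Proof. case: N => [[]//|a l _]. exists a. by left. Qed.

Lemma nab_sub Phi e' p q : is_profile lt Phi ->
  (forall v, sat v (B e') -> (v == p) || (v == q)) ->
  forall v, sat v (B (nabla Phi e')) =
    if sat p (B e') && sat q (B e')
    then ((v == p) && le Phi p q) || ((v == q) && le Phi q p)
    else ((v == p) && sat p (B e')) || ((v == q) && sat q (B e')).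
Proof.
move=> Hp Hsub v.
case hp: (sat p (B e')); case hq: (sat q (B e')) => /=.
- rewrite -nab_pst //. apply: fus2 => // u. rewrite sat_pst.
  apply/idP/idP => [/Hsub // | /orP [/eqP->|/eqP->] //].
- have [c Hc] := cons_B (nabla Phi e').
  have Hcp : c = p.
    have := Hsub c (fus1 Hp Hc). case/orP => /eqP // Hcq. subst c.
    by rewrite (fus1 Hp Hc) in hq.
  subst c. rewrite andbT andbF orbF.
  apply/idP/eqP => [h | ->] //.
  have := Hsub v (fus1 Hp h). case/orP => /eqP // Hvq. subst v. by rewrite (fus1 Hp h) in hq.
- have [c Hc] := cons_B (nabla Phi e').
  have Hcq : c = q.
    have := Hsub c (fus1 Hp Hc). case/orP => /eqP // Hcp. subst c.
    by rewrite (fus1 Hp Hc) in hp.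
  subst c. rewrite andbT andbF /=.
  apply/idP/eqP => [h | ->] //.
  have := Hsub v (fus1 Hp h). case/orP => /eqP // Hvp. subst v. by rewrite (fus1 Hp h) in hp.
- have [c Hc] := cons_B e'. have := Hsub c Hc. case/orP => /eqP Hc'; subst c.
  by rewrite Hc in hp. by rewrite Hc in hq.
Qed.

Lemma iia N Phi Phi' p q : is_society lt N -> is_N_profile lt N Phi -> is_N_profile lt N Phi' ->
  (forall j ej ej', In (j, ej) Phi -> In (j, ej') Phi' ->
     le (single j ej) p q = le (single j ej') p q /\ le (single j ej) q p = le (single j ej') q p) ->
  le Phi p q = le Phi' p q.
Proof.
move=> Hs H1 H2 Hag.
have Hc : forall e', entails (B e') (B (pst p q)) -> forall j ej ej', In (j, ej) Phi -> In (j, ej') Phi' ->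
   fequiv (B (nabla (single j ej) e')) (B (nabla (single j ej') e')).
  move=> e' He' j ej ej' Hj Hj'.
  have Hsub : forall v, sat v (B e') -> (v == p) || (v == q).
    move=> v h. by rewrite -sat_pst; apply: He'.
  have [a1 a2] := Hag j ej ej' Hj Hj'.
  have Eq : forall v, sat v (B (nabla (single j ej) e')) = sat v (B (nabla (single j ej') e')).
    move=> v. rewrite (nab_sub _ (p:=p) (q:=q)) //; try exact: single_prof.
    rewrite (nab_sub _ (p:=p) (q:=q)) //; try exact: single_prof. by rewrite a1 a2.
  split => v h; by rewrite ?Eq // -?Eq.
have [h1 h2] := HI Hs H1 H2 Hc.
rewrite /le. apply/idP/idP; [apply: h1 | apply: h2].
Qed.

Lemma pareto N Phi x y : is_society lt N -> is_N_profile lt N Phi -> x != y ->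
  (forall i ei, In (i, ei) Phi -> ltp (single i ei) x y) -> ltp Phi x y.
Proof.
move=> Hs HPhi nxy H. apply/negP => Hyx.
apply: (HPa (e := pst x y) (e' := sst y) Hs HPhi).
- exists x => i ei Hin. change (le (single i ei) x y). apply: lt_le (H i ei Hin). exact: single_prof.
- move=> i ei Hin [v /= /andP [h1 h2]]. rewrite sat_sst in h2. move/eqP: h2 => ?; subst v.
  rewrite le_swap in h1; last exact: single_prof. by move/negP: (H i ei Hin).
- exists y. rewrite /= sat_sst eqxx andbT le_swap //. exact: (proj1 HPhi).
Qed.

Definition Decp N (G : S -> Prop) a b := forall Phi, is_N_profile lt N Phi ->
  (forall i ei, In (i, ei) Phi -> G i -> ltp (single i ei) a b) -> ltp Phi a b.
Definition Weak N (G : S -> Prop) a b := forall Phi, is_N_profile lt N Phi ->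
  (forall i ei, In (i, ei) Phi -> (G i -> ltp (single i ei) a b) /\ (~ G i -> ltp (single i ei) b a)) ->
  ltp Phi a b.
Definition Dec N (G : S -> Prop) := forall a b, a != b -> Decp N G a b.

Lemma decp_weak N G a b : Decp N G a b -> Weak N G a b.
Proof. move=> H Phi HPhi Hp. apply: H HPhi _ => i ei Hin hG. by apply: (proj1 (Hp i ei Hin)). Qed.

Lemma sig_lt i j e e' a b : ltp (single i e) a b -> ltp (single j e') a b ->
  le (single i e) a b = le (single j e') a b /\ le (single i e) b a = le (single j e') b a.
Proof.
move=> h1 h2. have l1 := lt_le (single_prof i e) h1. have l2 := lt_le (single_prof j e') h2.
rewrite /ltp in h1 h2. by rewrite l1 l2 (negbTE h1) (negbTE h2).
Qed.

Lemma transfer N Phi (g : S -> E -> E) p q : is_society lt N -> is_N_profile lt N Phi ->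
  (forall i ei, In (i, ei) Phi -> le (single i ei) p q = le (single i (g i ei)) p q /\
       le (single i ei) q p = le (single i (g i ei)) q p) ->
  le Phi q p = le (map (fun pr => (pr.1, g pr.1 pr.2)) Phi) q p.
Proof.
move=> Hs HPhi H. apply: (iia Hs HPhi (nprof_mod g HPhi)).
move=> j ej ej' Hj Hj'. have [ej2 [Hj2 ->]] := in_mod Hj'.
have E2 := prof_uniq (proj1 HPhi) Hj Hj2. subst ej2.
have [a1 a2] := H j ej Hj. by split.
Qed.

Lemma fa N G x y b : is_society lt N -> x != y -> b != x -> b != y -> Weak N G x y -> Decp N G x b.
Proof.
move=> Hs nxy nbx nby HW Phi HPhi HG.
have [i0 _] := agent_of Hs.
have nyb : y != b by rewrite eq_sym.
have nxb : x != b by rewrite eq_sym.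
have nyx : y != x by rewrite eq_sym.
have [E1 HE1] := chain i0 nxy nyb nxb.
have [Ett Htt] := bot i0 (l1 := true) (l2 := true) nyx nxb nyb isT.
have [Etf Htf] := bot i0 (l1 := true) (l2 := false) nyx nxb nyb isT.
have [Eft Hft] := bot i0 (l1 := false) (l2 := true) nyx nxb nyb isT.
pose g := fun i ei => if excluded_middle_informative (G i) then E1
  else if le (single i ei) x b then (if le (single i ei) b x then Ett else Etf) else Eft.
have HPhi' := nprof_mod g HPhi.
have Hp' := proj1 HPhi'.
have Hxy : ltp (map (fun pr => (pr.1, g pr.1 pr.2)) Phi) x y.
  apply: HW => // i e' Hin. have [ej [Hj ->]] := in_mod Hin. rewrite /g.
  case: excluded_middle_informative => hG.
  - split => h; last by []. by have [] := HE1 i.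
  - split => h; first by [].
    case: (le (single i ej) x b); [case: (le (single i ej) b x)|].
    + by have [] := Htt i.
    + by have [] := Htf i.
    + by have [] := Hft i.
have Hyb : ltp (map (fun pr => (pr.1, g pr.1 pr.2)) Phi) y b.
  apply: (pareto Hs HPhi' nyb) => i e' Hin. have [ej [Hj ->]] := in_mod Hin. rewrite /g.
  case: excluded_middle_informative => hG.
  - by have [] := HE1 i.
  - case: (le (single i ej) x b); [case: (le (single i ej) b x)|].
    + by have [] := Htt i.
    + by have [] := Htf i.
    + by have [] := Hft i.
have Hxb := lt_trans Hp' Hxy Hyb.
rewrite /ltp (transfer (g := g) Hs HPhi) //.
move=> i ei Hin. rewrite /g.
case: excluded_middle_informative => hG.
- have h := HG i ei Hin hG. have [_ _ h3] := HE1 i. exact: sig_lt h h3.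
- have tot := le_tot x b (single_prof i ei).
  case Hxb': (le (single i ei) x b); case Hbx': (le (single i ei) b x); rewrite ?Hxb' ?Hbx' in tot => //.
  + by have [_ _ -> ->] := Htt i.
  + by have [_ _ -> ->] := Htf i.
  + by have [_ _ -> ->] := Hft i.
Qed.

Lemma fb N G x y a : is_society lt N -> x != y -> a != x -> a != y -> Weak N G x y -> Decp N G a y.
Proof.
move=> Hs nxy nax nay HW Phi HPhi HG.
have [i0 _] := agent_of Hs.
have nxa : x != a by rewrite eq_sym.
have [E1 HE1] := chain i0 nax nxy nay.
have [Ett Htt] := top i0 (l1 := true) (l2 := true) nxa nay nxy isT.
have [Etf Htf] := top i0 (l1 := true) (l2 := false) nxa nay nxy isT.
have [Eft Hft] := top i0 (l1 := false) (l2 := true) nxa nay nxy isT.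
pose g := fun i ei => if excluded_middle_informative (G i) then E1
  else if le (single i ei) a y then (if le (single i ei) y a then Ett else Etf) else Eft.
have HPhi' := nprof_mod g HPhi.
have Hp' := proj1 HPhi'.
have Hxy : ltp (map (fun pr => (pr.1, g pr.1 pr.2)) Phi) x y.
  apply: HW => // i e' Hin. have [ej [Hj ->]] := in_mod Hin. rewrite /g.
  case: excluded_middle_informative => hG.
  - split => h; last by []. by have [] := HE1 i.
  - split => h; first by [].
    case: (le (single i ej) a y); [case: (le (single i ej) y a)|].
    + by have [] := Htt i.
    + by have [] := Htf i.
    + by have [] := Hft i.
have Hax : ltp (map (fun pr => (pr.1, g pr.1 pr.2)) Phi) a x.
  apply: (pareto Hs HPhi' nax) => i e' Hin. have [ej [Hj ->]] := in_mod Hin. rewrite /g.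
  case: excluded_middle_informative => hG.
  - by have [] := HE1 i.
  - case: (le (single i ej) a y); [case: (le (single i ej) y a)|].
    + by have [] := Htt i.
    + by have [] := Htf i.
    + by have [] := Hft i.
have Hay := lt_trans Hp' Hax Hxy.
rewrite /ltp (transfer (g := g) Hs HPhi) //.
move=> i ei Hin. rewrite /g.
case: excluded_middle_informative => hG.
- have h := HG i ei Hin hG. have [_ _ h3] := HE1 i. exact: sig_lt h h3.
- have tot := le_tot a y (single_prof i ei).
  case Hxb': (le (single i ei) a y); case Hbx': (le (single i ei) y a); rewrite ?Hxb' ?Hbx' in tot => //.
  + by have [_ _ -> ->] := Htt i.
  + by have [_ _ -> ->] := Htf i.
  + by have [_ _ -> ->] := Hft i.
Qed.

Lemma fe N G x y : is_society lt N -> x != y -> Weak N G x y -> Dec N G.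
Proof.
move=> Hs nxy HW.
have S1 : forall b, b != x -> Decp N G x b.
  move=> b nbx. case: (eqVneq b y) => [->|nby].
  - have [z [nzx nzy]] := third HP x y.
    have Dxz := fa Hs nxy nzx nzy HW.
    apply: (fa (x := x) (y := z) (b := y)) Hs _ _ _ (decp_weak Dxz); by rewrite eq_sym.
  - exact: fa Hs nxy nbx nby HW.
move=> a b nab. case: (eqVneq a x) => [Eax|nax].
  subst a. apply: S1. by rewrite eq_sym.
case: (eqVneq b x) => [Ebx|nbx].
- subst b. have [z [nza nzx]] := third HP a x.
  have Dxz := S1 z nzx.
  have Daz := fb (x := x) (y := z) (a := a) Hs ltac:(by rewrite eq_sym) nax ltac:(by rewrite eq_sym) (decp_weak Dxz).
  apply: (fa (x := a) (y := z) (b := x)) Hs _ _ _ (decp_weak Daz) => //; by rewrite eq_sym.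
- have Dxb := S1 b nbx.
  apply: (fb (x := x) (y := b) (a := a)) Hs _ nax nab (decp_weak Dxb). by rewrite eq_sym.
Qed.

Lemma contract N G G1 G2 : is_society lt N -> Dec N G -> (forall i, G i <-> G1 i \/ G2 i) ->
  (forall i, G1 i -> G2 i -> False) -> Dec N G1 \/ Dec N G2.
Proof.
move=> Hs HD HG Hdis.
have [i0 _] := agent_of Hs.
pose x : W := [ffun => true].
have [y [nyx _]] := third HP x x.
have [z [nzx nzy]] := third HP x y.
have nxy : x != y by rewrite eq_sym.
have nyz : y != z by rewrite eq_sym.
have nxz : x != z by rewrite eq_sym.
have [E1 HE1] := chain i0 nxy nyz nxz.
have [E2 HE2] := chain i0 nzx nxy nzy.
have [E3 HE3] := chain i0 nyz nzx nyx.
pose h := fun i => if excluded_middle_informative (G1 i) then E1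
  else if excluded_middle_informative (G2 i) then E2 else E3.
have HPhi' := nprof_map h Hs.
have Hp' := proj1 HPhi'.
have Hxy : ltp (map (fun i => (i, h i)) N) x y.
  apply: (HD x y nxy _ HPhi') => i ei Hin hGi. rewrite (in_map_prof Hin) /h.
  case: excluded_middle_informative => h1; first by have [] := HE1 i.
  case: excluded_middle_informative => h2; first by have [] := HE2 i.
  exfalso. by case: (proj1 (HG i) hGi).
case Hzx: (le (map (fun i => (i, h i)) N) z x).
- right. apply: (fe (x := z) (y := y)) => //.
  move=> Psi HPsi Hpat. rewrite /ltp (iia (Phi' := map (fun i => (i, h i)) N) Hs HPsi HPhi').
  + exact: le_lt_trans Hp' Hzx Hxy.
  + move=> j ej ej' Hj Hj'. rewrite (in_map_prof Hj') /h. have [p1 p2] := Hpat j ej Hj.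
    case: excluded_middle_informative => h1.
    * have hn2 : ~ G2 j by move=> h2; exact: Hdis j h1 h2.
      have [_ l _] := HE1 j. exact: sig_lt (p2 hn2) l.
    * case: excluded_middle_informative => h2.
      - have [_ _ l] := HE2 j. have [a1 a2] := sig_lt (p1 h2) l. by split.
      - have [l _ _] := HE3 j. exact: sig_lt (p2 h2) l.
- left. apply: (fe (x := x) (y := z)) => //.
  move=> Psi HPsi Hpat. rewrite /ltp (iia (Phi' := map (fun i => (i, h i)) N) Hs HPsi HPhi').
  + by rewrite Hzx.
  + move=> j ej ej' Hj Hj'. rewrite (in_map_prof Hj') /h. have [p1 p2] := Hpat j ej Hj.
    case: excluded_middle_informative => h1.
    * have [_ _ l] := HE1 j. have [a1 a2] := sig_lt (p1 h1) l. by split.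
    * case: excluded_middle_informative => h2.
      - have [l _ _] := HE2 j. exact: sig_lt (p2 h1) l.
      - have [_ l _] := HE3 j. exact: sig_lt (p2 h1) l.
Qed.

Lemma dec_empty N G : is_society lt N -> Dec N G -> (forall i, ~ G i) -> False.
Proof.
move=> Hs HD Hn.
have [e0] := inhE.
have HP0 := nprof_map (fun _ => e0) Hs.
pose x : W := [ffun => true].
have [y [nyx _]] := third HP x x.
have nxy : x != y by rewrite eq_sym.
have H1 := HD x y nxy _ HP0 (fun i ei _ hg => False_ind _ (Hn i hg)).
have H2 := HD y x nyx _ HP0 (fun i ei _ hg => False_ind _ (Hn i hg)).
rewrite /ltp in H1 H2. have := le_tot x y (proj1 HP0). by rewrite (negbTE H1) (negbTE H2).
Qed.

Lemma shrink N : is_society lt N -> forall L G, (forall i, G i -> In i L) -> Dec N G ->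
  exists d, G d /\ Dec N (fun i => i = d).
Proof.
move=> Hs. elim=> [|a L IH] G HGL HD.
  exfalso. apply: (dec_empty Hs HD) => i Gi. exact: HGL i Gi.
case: (classic (G a)) => Ga.
- have Hcov : forall i, G i <-> (i = a) \/ (G i /\ i <> a).
    move=> i. split.
      move=> Gi. case: (classic (i = a)) => [->|nia]; [by left | by right].
    by case=> [->|[]].
  have Hdis : forall i, i = a -> G i /\ i <> a -> False by move=> i -> [].
  case: (contract Hs HD Hcov Hdis).
  + move=> H. by exists a.
  + move=> H.
    have HL : forall i, G i /\ i <> a -> In i L.
      move=> i [Gi nia]. case: (HGL i Gi) => // Eai. by case: nia; rewrite Eai.
    have [d [[Gd _] Hd]] := IH _ HL H.
    by exists d.
- apply: IH => // i Gi. case: (HGL i Gi) => // Eai. subst i. by case: Ga.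
Qed.

Lemma dec_all N : is_society lt N -> Dec N (fun i => In i N).
Proof.
move=> Hs a b nab Phi HPhi H. apply: (pareto Hs HPhi nab) => i ei Hin.
exact: H Hin (in_nprof HPhi Hin).
Qed.

Lemma dictator : ESF_D lt B nabla.
Proof.
move=> N Hs.
have [d [Hd HDd]] := shrink Hs (L := N) (G := fun i => In i N) (fun i h => h) (dec_all Hs).
exists d; split => //.
move=> Phi e HPhi ed Hed w Hw.
case Hc: (sat w (B (nabla (single d ed) e))) => //. exfalso.
set s := single d ed.
have Hps : is_profile lt s := single_prof d ed.
have HpP := proj1 HPhi.
have [x Hx] := cons_B (nabla s e).
have Hsub : forall v, sat v (B (pst x w)) -> sat v (B e).
  move=> v. rewrite sat_pst. case/orP => /eqP ->; [exact: fus1 Hps Hx | exact: fus1 HpP Hw].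
have A1 := arrowax Hps Hsub Hx (ltac:(by rewrite sat_pst eqxx) : sat x (B (pst x w))).
have Hlt : ltp s x w.
  rewrite /ltp -(le_swap _ _ Hps) A1. by rewrite /s Hc.
have nxw : x != w.
  apply/eqP => exw. subst x. by rewrite /s Hc in Hx.
have HlP : ltp Phi x w.
  apply: (HDd x w nxw Phi HPhi) => i ei Hin Eid. subst i.
  have <- := prof_uniq HpP Hed Hin. exact: Hlt.
have A2 := arrowax HpP Hsub Hw (ltac:(by rewrite sat_pst eqxx orbT) : sat w (B (pst x w))).
move: HlP. rewrite /ltp -(le_swap _ _ HpP) A2 Hw sat_pst eqxx orbT. by [].
Qed.

End Main.

Theorem theorem6 (P : finType) (E : Type) (B : E -> form P)
  (S : Type) (lt : S -> S -> Prop) (nabla : combination S E) :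
  epistemic_space B ->
  (1 < #|P|)%N ->
  strict_well_order lt ->
  ES_basic_fusion lt B nabla ->
  ESF_SD B nabla -> ESF_P lt B nabla -> ESF_I lt B nabla ->
  ESF_D lt B nabla.
Proof.
move=> H1 H2 H3 H4 H5 H6 H7. exact: (dictator H1 H2 H3 H4 H5 H6 H7).
Qed.
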